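(* For every tree $T$, the numbers $\mathrm{sn}(T,k)$ are monotone non-decreasing in $k$ (for $k\ge\chi(T)$).
   Context: For a graph $G=(V,E)$ and an integer $k\ge\chi(G)$, a proper $k$-colouring is a map $c:V\to[k]$ with $c(u)\neq c(v)$ for every edge $uv$. $\mathrm{sn}(G,k)$ is the minimum number of vertices of $G$ that have to be coloured in a partial colouring such that there exists a unique proper $k$-colouring of $G$ extending it. *)

(* Defs.v *)
From mathcomp Require Import all_boot.
Set Implicit Arguments. Unset Strict Implicit. Unset Printing Implicit Defensive.

Section Graphs.
Variable T : finType.
Implicit Types (e : rel T).

Definition simple_graph e := symmetric e /\ irreflexive e.

Definition connected_graph e := forall x y : T, connect e x y.

Definition acyclic e :=
  forall (x : T) (p : seq T),
    uniq (x :: p) -> path e x p -> 2 <= size p -> ~~ e (last x p) x.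

Definition is_tree e := [/\ simple_graph e, 0 < #|T|, connected_graph e & acyclic e].

Definition proper_col e k (c : {ffun T -> 'I_k}) : bool :=
  [forall x, forall y, e x y ==> (c x != c y)].

(* chromatic number: least k admitting a proper k-colouring (k <= |V| always works) *)
Definition chi e : nat :=
  \big[minn/#|T|]_(k < #|T|.+1 | [exists c : {ffun T -> 'I_k}, proper_col e c]) (k : nat).

Definition defining_set e k (S : {set T}) : bool :=
  [exists f : {ffun T -> 'I_k},
     #|[set c : {ffun T -> 'I_k} | proper_col e c && [forall x in S, c x == f x]]| == 1].

(* sn(G,k): minimum size of a defining set (default #|T|.+1 if none exists,
   which only happens when k < chi) *)
Definition sn e k : nat :=
  \big[minn/#|T|.+1]_(S : {set T} | defining_set e k S) #|S|.

End Graphs.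

(* Main.v *)
Require Import Defs.
From mathcomp Require Import all_boot zify.
Set Implicit Arguments. Unset Strict Implicit. Unset Printing Implicit Defensive.

Lemma fact_card (T X Y : finType) (A : {set T}) (f : T -> X) (g : T -> Y) :
  {in A &, forall w1 w2, f w1 = f w2 -> g w1 = g w2} ->
  #|g @: A| <= #|f @: A| /\
  (#|f @: A| <= #|g @: A| -> {in A &, forall w1 w2, g w1 = g w2 -> f w1 = f w2}).
Proof.
move=> Hfg.
case: (set_0Vmem A) => [->|[w0 Hw0]].
  by rewrite !imset0 !cards0; split=> // _ w1 w2; rewrite in_set0.
pose h y := g (odflt w0 [pick w in A | f w == y]).
have hg : {in A, forall w, h (f w) = g w}.
  move=> w wA; rewrite /h; case: pickP => [w' /andP [w'A /eqP fw]|] /=.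
    exact: Hfg.
  by move/(_ w); rewrite wA eqxx.
have EG : g @: A = h @: (f @: A).
  by rewrite -imset_comp; apply: eq_in_imset => w wA /=; rewrite hg.
split; first by rewrite EG leq_imset_card.
move=> Hle w1 w2 w1A w2A Eg.
have /imset_injP Hinj : #|h @: (f @: A)| == #|f @: A|.
  by rewrite eqn_leq leq_imset_card -EG.
apply: Hinj; try exact: imset_f.
by rewrite !hg.
Qed.

Lemma leaf_ex (T : finType) (e : rel T) : symmetric e -> irreflexive e -> acyclic e ->
  forall U : {set T}, U != set0 ->
  exists2 l, l \in U & forall x y, x \in U -> y \in U -> e l x -> e l y -> x = y.
Proof.
move=> esym eirr eac U /set0Pn [u0 u0U].
case: (boolP [exists l in U, [forall x in U, forall y in U, e l x ==> e l y ==> (x == y)]]).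
  case/exists_inP => l lU /forall_inP H; exists l => // x y xU yU exl eyl.
  by move/(_ x xU)/forall_inP/(_ y yU): H; rewrite exl eyl => /eqP.
move/exists_inPn => H.
have H2 : forall l, l \in U -> exists x y, [/\ x \in U, y \in U, e l x, e l y & x != y].
  move=> l lU; move/forall_inPn: (H l lU) => [x xU /forall_inPn [y yU]].
  by rewrite negb_imply => /andP [exl]; rewrite negb_imply => /andP [eyl nxy]; exists x, y.
have grow : forall n, exists y t, [/\ size t = n, uniq (y :: t), {subset y :: t <= U} & path e y t].
  elim=> [|n [y [t [st ut sub pt]]]].
    by exists u0, [::]; split=> // x; rewrite inE => /eqP ->.
  have yU : y \in U by apply: sub; rewrite inE eqxx.
  have [x1 [x2 [x1U x2U ex1 ex2 nx]]] := H2 y yU.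
  have [z [zU eyz zq]] : exists z, [/\ z \in U, e y z & forall q r, t = q :: r -> z != q].
    case: t {st ut sub pt} => [|q r]; first by exists x1.
    case: (boolP (x1 != q)) => h; first by exists x1; split=> // q' r' [<- _].
    exists x2; split=> // q' r' [<- _]; move: h; rewrite negbK => /eqP <-.
    by rewrite eq_sym.
  have znt : z \notin t.
    apply/negP => zt.
    have iz : 0 < index z t.
      case: t zq zt {st ut sub pt eyz} => // q r zq; rewrite /= .
      by case: eqP => // E; move: (zq q r erefl); rewrite E eqxx.
    pose p := take (index z t).+1 t.
    have sp : size p = (index z t).+1 by rewrite size_takel // index_mem.
    have lp : last y p = z.
      rewrite -nth_last sp /= /p nth_take //; exact: nth_index.
    have := eac y p.
    have -> : uniq (y :: p) by rewrite /p -/(take (index z t).+2 (y :: t)); apply: take_uniq.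
    rewrite (take_path _ pt) sp ltnS iz lp esym eyz.
    by move=> /(_ isT isT isT).
  exists z, (y :: t); split=> //=.
  - by rewrite st.
  - rewrite -/(uniq (y :: t)) ut andbT inE negb_or znt andbT.
    by apply/negP => /eqP zy; move: eyz; rewrite zy eirr.
  - by move=> x; rewrite inE => /predU1P [->|]; [|apply: sub].
  - by rewrite esym eyz.
have [y [t [st ut sub _]]] := grow #|U|.
have := uniq_leq_size (s2 := enum U) ut.
rewrite /= st -cardE ltnn.
have H4 : {subset y :: t <= enum U} by move=> x /sub; rewrite mem_enum.
by move/(_ H4).
Qed.

Lemma pick_other (X : finType) (L : {set X}) (x : X) : 1 < #|L| -> exists2 y, y \in L & y != x.
Proof.
move=> HL; have : 0 < #|L :\ x|.
  by move: HL; rewrite (cardsD1 x L); case: (x \in L) => //= /ltnW.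
by case/card_gt0P => y; rewrite !inE => /andP [yx yL]; exists y.
Qed.

Lemma list_col (T : finType) (e : rel T) : symmetric e -> irreflexive e -> acyclic e ->
  forall m (L : T -> {set 'I_m}) (c : T -> 'I_m) (U : {set T}),
  U != set0 -> (forall u, u \in U -> 1 < #|L u|) ->
  exists d : T -> 'I_m, [/\ (forall u, u \in U -> d u \in L u),
    (forall x y, x \in U -> y \in U -> e x y -> d x != d y) &
    exists2 u, u \in U & d u != c u].
Proof.
move=> esym eirr eac m L c U.
elim: {U}_.+1 {-2}U (ltnSn #|U|) => // n IH U HU U0 HL.
have [l lU lleaf] := leaf_ex esym eirr eac U0.
case: (boolP (U :\ l == set0)) => [/eqP U1 | U1].
  have Ul : forall x, x \in U -> x = l.
    move=> x xU; apply/eqP; apply/negPn/negP => xl.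
    have : x \in U :\ l by rewrite !inE xl.
    by rewrite U1 inE.
  have [y yL yc] := pick_other (c l) (HL l lU).
  exists (fun _ => y); split => //.
  - by move=> u /Ul ->.
  - by move=> x z /Ul -> /Ul ->; rewrite eirr.
  - by exists l.
have HU' : #|U :\ l| < n.
  by move: HU; rewrite (cardsD1 l U) lU.
have [d0 [d0L d0p [u uU du]]] := IH _ HU' U1 (fun u uU => HL u (subsetP (subD1set U l) u uU)).
have [col colL colp] : exists2 col, col \in L l & forall p, p \in U :\ l -> e l p -> col != d0 p.
  case: (boolP [exists p in U :\ l, e l p]) => [/exists_inP [p pU elp]|/exists_inPn H].
    have [y yL yc] := pick_other (d0 p) (HL l lU).
    exists y => // p' p'U elp'.
    have pU' : p \in U by move: pU; rewrite inE => /andP [].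
    have p'U' : p' \in U by move: p'U; rewrite inE => /andP [].
    by rewrite (lleaf p' p p'U' pU' elp' elp).
  have [y yL _] := pick_other (c l) (HL l lU).
  by exists y => // p pU elp; move: (H p pU); rewrite elp.
exists (fun v => if v == l then col else d0 v); split.
- by move=> v vU; case: eqP => [->|/eqP vl] //; apply: d0L; rewrite !inE vl.
- move=> x y xU yU exy.
  case: (x =P l) => [xl|/eqP xl]; case: (y =P l) => [yl|/eqP yl].
  + by move: exy; rewrite xl yl eirr.
  + by subst x; apply: colp => //; rewrite !inE yl.
  + by subst y; rewrite eq_sym; apply: colp; rewrite 1?esym // !inE xl.
  + by apply: d0p => //; rewrite !inE ?xl ?yl.
- exists u; first by move: uU; rewrite inE => /andP [].
  by move: uU; rewrite !inE => /andP [ul _]; rewrite (negbTE ul).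
Qed.

Definition okp (X Y : eqType) (a : X) (x1 x2 : X) (y1 y2 : Y) :=
  (x1 = x2 -> y1 = y2) /\ (x1 != a -> x2 != a -> y1 = y2 -> x1 = x2).

Lemma okp_sym (X Y : eqType) (a : X) x1 x2 (y1 y2 : Y) : okp a x1 x2 y1 y2 -> okp a x2 x1 y2 y1.
Proof. by move=> [h1 h2]; split=> [E|n1 n2 E]; [rewrite h1 | rewrite h2]. Qed.

Lemma okp_refl (X Y : eqType) (a : X) x (y : Y) : okp a x x y y.
Proof. by []. Qed.

Definition Loc (T X Y : finType) (e : rel T) (c : T -> X) (c' : T -> Y) (W : {set T}) u :=
  exists a, forall w1 w2, w1 \in W -> w2 \in W -> e u w1 -> e u w2 ->
    okp a (c w1) (c w2) (c' w1) (c' w2).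

Lemma construct (T : finType) (e : rel T) : symmetric e -> irreflexive e -> acyclic e ->
  forall k (c : T -> 'I_k.+1) (g0 : T -> 'I_k),
  (forall x y, e x y -> c x != c y) -> (forall x y, e x y -> g0 x != g0 y) ->
  forall W : {set T}, exists c' : T -> 'I_k,
   (forall x y, x \in W -> y \in W -> e x y -> c' x != c' y) /\
   (forall u, u \in W -> Loc e c c' W u).
Proof.
move=> esym eirr eac k c g0 cP g0P W.
elim: {W}_.+1 {-2}W (ltnSn #|W|) => // n IH W HW.
case: (boolP (W == set0)) => [/eqP -> | W0].
  by exists g0; split=> [x y|u]; rewrite in_set0.
have [l lW lleaf] := leaf_ex esym eirr eac W0.
have HW' : #|W :\ l| < n by move: HW; rewrite (cardsD1 l W) lW.
have [c0 [P0 L0]] := IH _ HW'.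
have inW' : forall w, w \in W -> w != l -> w \in W :\ l by move=> w wW wl; rewrite !inE wl.
have W'W : forall w, w \in W :\ l -> w \in W /\ w != l
  by move=> w; rewrite !inE => /andP [].
pose upd col := fun v => if v == l then col else c0 v.
have key : exists col, forall p, p \in W :\ l -> e l p ->
    col != c0 p /\ Loc e c (upd col) W p.
  case: (boolP [exists p in W :\ l, e l p]) => [/exists_inP [p pW' elp]|/exists_inPn H]; last first.
    by exists (c0 l) => p pW' elp; move: (H p pW'); rewrite elp.
  have [pW pl] := W'W p pW'.
  suff [col [colp Lp]] : exists col, col != c0 p /\ Loc e c (upd col) W p.
    exists col => p' p'W' elp'; have [p'W _] := W'W p' p'W'.
    by rewrite (lleaf p' p p'W pW elp' elp).
  have [a0 H0] := L0 p pW'.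
  have Lred : forall col a,
      (forall w1 w2, w1 \in W :\ l -> w2 \in W :\ l -> e p w1 -> e p w2 ->
         okp a (c w1) (c w2) (c0 w1) (c0 w2)) ->
      (forall w, w \in W :\ l -> e p w -> okp a (c l) (c w) col (c0 w)) ->
      Loc e c (upd col) W p.
    move=> col a Hww Hlw; exists a => w1 w2 w1W w2W ep1 ep2; rewrite /upd.
    case: (w1 =P l) => [->|/eqP w1l]; case: (w2 =P l) => [->|/eqP w2l].
    - exact: okp_refl.
    - exact: Hlw (inW' _ w2W w2l) ep2.
    - apply: okp_sym; exact: Hlw (inW' _ w1W w1l) ep1.
    - exact: Hww (inW' _ w1W w1l) (inW' _ w2W w2l) ep1 ep2.
  case: (boolP [exists w0 in W :\ l, e p w0 && (c w0 == c l)]).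
    case/exists_inP => w0 w0W' /andP [epw0 /eqP cw0].
    exists (c0 w0); split.
      by apply: P0 => //; rewrite esym.
    apply: (Lred _ a0) => [w1 w2 w1W w2W ep1 ep2|w wW epw]; first exact: H0.
    have [h1 h2] := H0 w0 w w0W' wW epw0 epw.
    rewrite -cw0; split=> //.
  move/exists_inPn => Hn1.
  have cnl : forall w, w \in W :\ l -> e p w -> c l != c w.
    by move=> w wW epw; move: (Hn1 w wW); rewrite epw /= eq_sym.
  pose D := [set w in W :\ l | e p w].
  case: (boolP [exists x, (x != c0 p) && (x \notin c0 @: D)]).
    case/existsP => x /andP [xp xD]; exists x; split => //.
    apply: (Lred _ a0) => [w1 w2 w1W w2W ep1 ep2|w wW epw]; first exact: H0.
    split=> [E|_ _ E]; first by move: (cnl w wW epw); rewrite E eqxx.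
    by move: xD; rewrite E (imset_f c0 (_ : w \in D)) // inE wW epw.
  move/existsPn => Hfull.
  have [x xp] : exists x, x != c0 p.
    case: (boolP (g0 l == c0 p)) => [/eqP E|h]; last by exists (g0 l).
    by exists (g0 p); rewrite -E eq_sym; apply: g0P.
  exists x; split => //.
  have fac : {in D &, forall w1 w2, c w1 = c w2 -> c0 w1 = c0 w2}.
    move=> w1 w2; rewrite inE => /andP [w1W ep1]; rewrite inE => /andP [w2W ep2].
    by have [h _] := H0 w1 w2 w1W w2W ep1 ep2.
  have [_ inj] := fact_card fac.
  have cardc : #|c @: D| <= k.-1.
    have cpl : c p != c l by apply: cP; rewrite esym.
    have : c @: D \subset ~: [set c p; c l].
      apply/subsetP => y /imsetP [w]; rewrite inE => /andP [wW epw] ->.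
      rewrite !inE negb_or; apply/andP; split; first by rewrite eq_sym cP.
      by rewrite eq_sym cnl.
    move/subset_leq_card => h; apply: (leq_trans h).
    have := cardsC [set c p; c l]; rewrite cards2 cpl card_ord.
    by move=> E; lia.
  have cardc0 : k.-1 <= #|c0 @: D|.
    have : [set~ c0 p] \subset c0 @: D.
      apply/subsetP => y; rewrite !inE => yp.
      by move: (Hfull y); rewrite yp /= negbK.
    by move/subset_leq_card; rewrite cardsC1 card_ord.
  have inj' := inj (leq_trans cardc cardc0).
  apply: (Lred _ (c l)) => [w1 w2 w1W w2W ep1 ep2|w wW epw].
    have [h1 _] := H0 w1 w2 w1W w2W ep1 ep2; split=> // _ _ E.
    by apply: inj' => //; rewrite inE ?w1W ?w2W.
  split=> [E|]; first by move: (cnl w wW epw); rewrite E eqxx.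
  by rewrite eqxx.
have [col Hcol] := key.
exists (upd col); split.
- move=> x y xW yW exy; rewrite /upd.
  case: (x =P l) => [xl|/eqP xl]; case: (y =P l) => [yl|/eqP yl].
  + by move: exy; rewrite xl yl eirr.
  + by subst x; have [] := Hcol y (inW' _ yW yl) exy.
  + subst y; have elx : e l x by rewrite esym.
    by have [h _] := Hcol x (inW' _ xW xl) elx; rewrite eq_sym.
  + exact: P0 (inW' _ xW xl) (inW' _ yW yl) exy.
- move=> u uW.
  case: (u =P l) => [->|/eqP ul].
    exists (c l) => w1 w2 w1W w2W e1 e2.
    by rewrite (lleaf w1 w2 w1W w2W e1 e2); apply: okp_refl.
  case: (boolP (e l u)) => [elu|nelu].
    by have [] := Hcol u (inW' _ uW ul) elu.
  have [a Ha] := L0 u (inW' _ uW ul).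
  exists a => w1 w2 w1W w2W e1 e2.
  have w1l : w1 != l by apply/eqP => E; move: nelu; rewrite -E esym e1.
  have w2l : w2 != l by apply/eqP => E; move: nelu; rewrite -E esym e2.
  rewrite /upd (negbTE w1l) (negbTE w2l).
  exact: Ha (inW' _ w1W w1l) (inW' _ w2W w2l) e1 e2.
Qed.

Lemma propercolP (T : finType) (e : rel T) k (c : {ffun T -> 'I_k}) :
  reflect (forall x y, e x y -> c x != c y) (proper_col e c).
Proof.
apply: (iffP forallP) => [H x y exy | H x].
  by move/forallP: (H x) => /(_ y); rewrite exy.
by apply/forallP => y; apply/implyP; exact: H.
Qed.

Lemma cnt (T X Y : finType) (e : rel T) (c : T -> X) (c' : T -> Y) u :
  Loc e c c' setT u -> forall A : {set T}, (forall w, w \in A -> e u w) ->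
  #|c @: A| <= #|c' @: A| + 1.
Proof.
move=> [a Ha] A HA.
pose A0 := [set w in A | c w != a].
have fac : {in A0 &, forall w1 w2, c' w1 = c' w2 -> c w1 = c w2}.
  move=> w1 w2; rewrite !inE => /andP [w1A n1] /andP [w2A n2] E.
  by have [_ h] := Ha w1 w2 (in_setT _) (in_setT _) (HA _ w1A) (HA _ w2A); apply: h.
have [h1 _] := fact_card fac.
have h2 : #|c' @: A0| <= #|c' @: A|.
  by apply/subset_leq_card/imsetS/subsetP => w; rewrite inE => /andP [].
have h3 : c @: A \subset a |: c @: A0.
  apply/subsetP => y /imsetP [w wA ->]; rewrite inE.
  rewrite inE; case: (boolP (c w == a)) => /= cw; first by []. 
  apply/imsetP; exists w => //; by rewrite inE wA.
have := subset_leq_card h3; rewrite cardsU1.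
move: h1 h2; case: (a \notin _) => /=; lia.
Qed.

Lemma main_step (T : finType) (e : rel T) : symmetric e -> irreflexive e -> acyclic e ->
  forall k (g0 : {ffun T -> 'I_k}), proper_col e g0 ->
  forall S, defining_set e k.+1 S -> defining_set e k S.
Proof.
move=> esym eirr eac k g0 /propercolP g0P S /existsP [f /cards1P [c Hc]].
have : c \in [set c0 : {ffun T -> 'I_k.+1} | proper_col e c0 && [forall x in S, c0 x == f x]].
  by rewrite Hc set11.
rewrite inE => /andP [/propercolP cP /forall_inP cS].
have cuniq : forall d : {ffun T -> 'I_k.+1}, proper_col e d -> [forall x in S, d x == f x] -> d = c.
  move=> d dP dS.
  have : d \in [set c0 : {ffun T -> 'I_k.+1} | proper_col e c0 && [forall x in S, c0 x == f x]].
    by rewrite inE dP dS.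
  by rewrite Hc inE => /eqP.
have [c' [c'P c'L]] := construct esym eirr eac (c := fun v => c v) (g0 := fun v => g0 v) cP g0P setT.
pose cf := [ffun v => c' v].
have cfP : proper_col e cf.
  by apply/propercolP => x y exy; rewrite !ffunE; apply: c'P; rewrite ?in_setT.
apply/existsP; exists cf; apply/cards1P; exists cf; apply/setP => d; rewrite !inE.
apply/idP/idP; last first.
  by move/eqP ->; rewrite cfP /=; apply/forall_inP.
case/andP => /propercolP dP /forall_inP dS.
pose U := [set v | d v != cf v].
case: (boolP (U == set0)) => [/eqP U0|U0].
  apply/eqP/ffunP => v; apply/eqP/negPn/negP => dv.
  have : v \in U by rewrite inE dv.
  by rewrite U0 inE.
exfalso.
pose L u := ~: ((fun v => c v) @: [set w | e u w & w \notin U]).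
have HL : forall u, u \in U -> 1 < #|L u|.
  move=> u uU; pose A := [set w | e u w & w \notin U].
  have HA : forall w, w \in A -> e u w by move=> w; rewrite inE => /andP [].
  have h1 := cnt (c'L u (in_setT u)) HA.
  have h2 : c' @: A \subset ~: [set cf u; d u].
    apply/subsetP => y /imsetP [w]; rewrite inE => /andP [euw wU] ->.
    move: wU; rewrite inE negbK => /eqP dw.
    rewrite !inE negb_or; apply/andP; split.
      by rewrite ffunE eq_sym; apply: c'P; rewrite ?in_setT.
    by rewrite -(ffunE (fun v => c' v)) -/cf -dw eq_sym; apply: dP.
  have du : cf u != d u by move: uU; rewrite inE eq_sym.
  have h3 := subset_leq_card h2.
  have := cardsC [set cf u; d u]; rewrite cards2 du card_ord.
  have := cardsC ((fun v => c v) @: A); rewrite card_ord -/(L u).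
  move: h1 h3; rewrite -/A; lia.
have [d0 [d0L d0P [u uU d0u]]] := list_col esym eirr eac (fun v => c v) U0 HL.
pose d' := [ffun v => if v \in U then d0 v else c v].
have d'P : proper_col e d'.
  apply/propercolP => x y exy; rewrite !ffunE.
  case: (boolP (x \in U)) => xU; case: (boolP (y \in U)) => yU.
  - exact: d0P.
  - move: (d0L x xU); rewrite inE; apply: contra => /eqP ->.
    by apply: imset_f; rewrite inE exy yU.
  - move: (d0L y yU); rewrite inE eq_sym; apply: contra => /eqP ->.
    by apply: imset_f; rewrite inE esym exy xU.
  - exact: cP.
have d'S : [forall x in S, d' x == f x].
  apply/forall_inP => x xS; rewrite ffunE.
  have -> : (x \in U) = false by rewrite inE (dS x xS).
  exact: cS.
have := cuniq d' d'P d'S.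
move/ffunP/(_ u); rewrite ffunE uU => E.
by move: d0u; rewrite E eqxx.
Qed.

Lemma chi_col (T : finType) (e : rel T) : irreflexive e ->
  forall k, chi e <= k -> exists g : {ffun T -> 'I_k}, proper_col e g.
Proof.
move=> eirr k.
have : exists j, j <= chi e /\ exists g : {ffun T -> 'I_j}, proper_col e g.
  rewrite /chi; apply: (big_ind (fun x => exists j, j <= x /\ exists g : {ffun T -> 'I_j}, proper_col e g)) => [|x y [j [jx gj]] [j' [jy gj']]|i /existsP [g gP]].
  - exists #|T|; split=> //; exists [ffun x => enum_rank x].
    apply/propercolP => x y exy; rewrite !ffunE; apply/negP => /eqP /enum_rank_inj xy.
    by move: exy; rewrite xy eirr.
  - case: (leqP x y) => h.
      by exists j; split=> //; apply: (leq_trans jx); rewrite leq_min leqnn h.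
    by exists j'; split=> //; apply: (leq_trans jy); rewrite leq_min leqnn (ltnW h).
  - by exists i; split=> //; exists g.
move=> [j [jc [g gP0]]] ck.
have gP := elimT (propercolP e g) gP0.
have jk : j <= k by apply: leq_trans jc ck.
exists [ffun x => widen_ord jk (g x)]; apply/propercolP => x y exy; rewrite !ffunE.
by move: (gP x y exy); apply: contra => /eqP [] E; apply/eqP/val_inj.
Qed.

Lemma bigmin_leF (I : eqType) (r : seq I) (P : pred I) (F : I -> nat) x z :
  z \in r -> P z -> \big[minn/x]_(i <- r | P i) F i <= F z.
Proof.
elim: r => // i r IH; rewrite inE big_cons => /predU1P [<- ->|zr Pz].
  exact: geq_minl.
case: (P i); last exact: IH.
exact: leq_trans (geq_minr _ _) (IH zr Pz).
Qed.

Theorem corollary1 (T : finType) (e : rel T) :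
  is_tree e -> forall k : nat, chi e <= k -> sn e k <= sn e k.+1.
Proof.
move=> [[esym eirr] T0 _ eac] k ck.
have [g0 g0P] := chi_col eirr ck.
have snle : sn e k <= #|T|.+1.
  rewrite /sn; apply: (big_ind (fun x => x <= #|T|.+1)) => // [x y hx _|S _].
    exact: leq_trans (geq_minl x y) hx.
  by apply: leqW; apply: max_card.
rewrite {2}/sn; apply: (big_ind (fun x => sn e k <= x)) => // [x y hx hy|S HS].
  by rewrite leq_min hx hy.
have HS' := main_step esym eirr eac g0P HS.
by rewrite /sn; apply: bigmin_leF; rewrite ?mem_index_enum.
Qed.
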